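(* Let $(\widetilde M,\tilde p)$ be a non-compact model surface of revolution with metric $dt^2+f(t)^2d\theta^2$, where $f''(t)+G(t)f(t)=0$, $f(0)=0$, $f'(0)=1$. If $\widetilde M$ admits a finite total curvature $c(\widetilde M)<2\pi$, then the solution $m$ of $m''(t)+G_-(t)m(t)=0$ with $m(0)=0$, $m'(0)=1$, where $G_-:=\min\{G,0\}$, defines a non-compact model surface of revolution $(M^*,p^* )$ with metric $dt^2+m(t)^2d\theta^2$ which admits a finite total curvature.
   Context: A non-compact model surface of revolution is $\mathbb{R}^2$ with the metric $dt^2+h(t)^2d\theta^2$, where $(t,\theta)$ are polar coordinates about the origin and $h:(0,\infty)\to(0,\infty)$ extends to an odd function around $0$ with $h'(0)=1$; its Gauss curvature is $-h''/h$. The total curvature of a surface with Gauss curvature $G$ is $\int G_+\,dA+\int G_-\,dA$ ($G_+=\max\{G,0\}$, $G_-=\min\{G,0\}$, $dA=h(t)\,dt\,d\theta$), and it is finite if both integrals are finite. *)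

(* Defs.v *)
From Stdlib Require Import Reals Lra.
Open Scope R_scope.

Definition C2_with (h h1 h2 : R -> R) : Prop :=
  (forall t, derivable_pt_lim h t (h1 t)) /\
  (forall t, derivable_pt_lim h1 t (h2 t)) /\
  continuity h2.

(* A non-compact model surface of revolution: R^2 with metric
   dt^2 + h(t)^2 dtheta^2, where h > 0 on (0,oo), h extends to an odd
   function (here: h is given on all of R and is odd) with h'(0) = 1. *)
Definition model_surface (h : R -> R) : Prop :=
  exists h1 h2, C2_with h h1 h2 /\
    (forall t, h (- t) = - h t) /\
    h1 0 = 1 /\
    (forall t, 0 < t -> 0 < h t).

Definition gauss_curvature (h K : R -> R) : Prop :=
  exists h1 h2, C2_with h h1 h2 /\ forall t, 0 < t -> K t = - h2 t / h t.

Definition Gplus (K : R -> R) (t : R) : R := Rmax (K t) 0.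
Definition Gminus (K : R -> R) (t : R) : R := Rmin (K t) 0.

Definition improper_int0 (g : R -> R) (l : R) : Prop :=
  (forall b, 0 <= b -> inhabited (Riemann_integrable g 0 b)) /\
  (forall eps, 0 < eps -> exists B, forall b (pr : Riemann_integrable g 0 b),
      B <= b -> Rabs (RiemannInt pr - l) < eps).

(* Total curvature  int G_+ dA + int G_- dA  with dA = h dt dtheta,
   theta integrated over [0, 2 pi]; it is finite (equal to c) when both
   improper integrals converge. *)
Definition total_curvature (h : R -> R) (c : R) : Prop :=
  exists K cp cm, gauss_curvature h K /\
    improper_int0 (fun t => Gplus K t * h t) cp /\
    improper_int0 (fun t => Gminus K t * h t) cm /\
    c = 2 * PI * cp + 2 * PI * cm.

Definition finite_total_curvature (h : R -> R) : Prop :=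
  exists c, total_curvature h c.

Definition jacobi_sol (K h : R -> R) : Prop :=
  exists h1 h2,
    (forall t, derivable_pt_lim h t (h1 t)) /\
    (forall t, derivable_pt_lim h1 t (h2 t)) /\
    (forall t, h2 t + K t * h t = 0) /\
    h 0 = 0 /\ h1 0 = 1.

(* Main.v *)
Require Import Defs.
From Stdlib Require Import Reals.
Open Scope R_scope.
From Stdlib Require Import Lra Lia Arith ClassicalEpsilon FunctionalExtensionality.

Lemma dl_eq : forall f x l l', derivable_pt_lim f x l -> l = l' -> derivable_pt_lim f x l'.
Proof. intros; subst; auto. Qed.
Lemma dl_plus : forall f g x l1 l2, derivable_pt_lim f x l1 -> derivable_pt_lim g x l2 ->
  derivable_pt_lim (fun t => f t + g t) x (l1 + l2).
Proof. intros; apply (derivable_pt_lim_plus f g); auto. Qed.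
Lemma dl_minus : forall f g x l1 l2, derivable_pt_lim f x l1 -> derivable_pt_lim g x l2 ->
  derivable_pt_lim (fun t => f t - g t) x (l1 - l2).
Proof. intros; apply (derivable_pt_lim_minus f g); auto. Qed.
Lemma dl_mult : forall f g x l1 l2, derivable_pt_lim f x l1 -> derivable_pt_lim g x l2 ->
  derivable_pt_lim (fun t => f t * g t) x (l1 * g x + f x * l2).
Proof. intros; apply (derivable_pt_lim_mult f g); auto. Qed.
Lemma dl_opp : forall f x l, derivable_pt_lim f x l -> derivable_pt_lim (fun t => - f t) x (- l).
Proof. intros; apply (derivable_pt_lim_opp f); auto. Qed.
Lemma dl_const : forall a x, derivable_pt_lim (fun _ => a) x 0.
Proof. intros; apply derivable_pt_lim_const. Qed.
Lemma dl_id : forall x, derivable_pt_lim (fun t => t) x 1.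
Proof. intros; apply derivable_pt_lim_id. Qed.
Lemma dl_scal : forall f a x l, derivable_pt_lim f x l -> derivable_pt_lim (fun t => a * f t) x (a * l).
Proof. intros; apply (derivable_pt_lim_scal f a); auto. Qed.
Lemma dl_comp : forall f g x l1 l2, derivable_pt_lim f x l1 -> derivable_pt_lim g (f x) l2 ->
  derivable_pt_lim (fun t => g (f t)) x (l2 * l1).
Proof. intros; apply (derivable_pt_lim_comp f g); auto. Qed.
Lemma dl_pow : forall n x, derivable_pt_lim (fun t => t ^ n) x (INR n * x ^ pred n).
Proof. intros; apply derivable_pt_lim_pow. Qed.
Lemma dl_neg : forall f x l, derivable_pt_lim f (- x) l -> derivable_pt_lim (fun t => f (- t)) x (- l).
Proof. intros f x l H. apply dl_eq with (l * -1); [|ring].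
  apply dl_comp; auto. apply dl_eq with (-(1)); [apply dl_opp, dl_id|ring]. Qed.
Lemma deriv_cont : forall f f', (forall x, derivable_pt_lim f x (f' x)) -> continuity f.
Proof. intros f f' H x. apply derivable_continuous_pt. exists (f' x). apply H. Qed.
Lemma cont_mult : forall f g, continuity f -> continuity g -> continuity (fun t => f t * g t).
Proof. intros; apply (continuity_mult f g); auto. Qed.
Lemma cont_plus : forall f g, continuity f -> continuity g -> continuity (fun t => f t + g t).
Proof. intros; apply (continuity_plus f g); auto. Qed.
Lemma cont_opp : forall f, continuity f -> continuity (fun t => - f t).
Proof. intros; apply (continuity_opp f); auto. Qed.
Lemma cont_const : forall c, continuity (fun _ : R => c).
Proof. intros; apply continuity_const; intros ? ?; auto. Qed.
Lemma Rmin0_eq : forall a, Rmin a 0 = / 2 * (a + - Rabs a).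
Proof. intros a. unfold Rmin. destruct (Rle_dec a 0).
  - rewrite Rabs_left1 by lra. lra.
  - rewrite Rabs_right by lra. lra. Qed.
Lemma cont_Rmin0 : forall f, continuity f -> continuity (fun t => Rmin (f t) 0).
Proof.
  intros f Hf. replace (fun t => Rmin (f t) 0) with (fun t => / 2 * (f t + - Rabs (f t))).
  - apply cont_mult; [apply cont_const|]. apply cont_plus; auto. apply cont_opp.
    intro x; apply (continuity_comp f Rabs); [apply Hf|apply Rcontinuity_abs].
  - apply functional_extensionality; intro; symmetry; apply Rmin0_eq.
Qed.

Lemma deriv_local : forall (f g : R -> R) x l d, 0 < d ->
  (forall y, Rabs (y - x) < d -> f y = g y) ->
  derivable_pt_lim g x l -> derivable_pt_lim f x l.
Proof.
  intros f g x l d Hd Heq Hg eps Heps.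
  destruct (Hg eps Heps) as [del Hdel].
  assert (Hp : 0 < Rmin del d) by (apply Rmin_pos; [apply cond_pos|lra]).
  exists (mkposreal _ Hp). intros h Hh0 Hh. simpl in Hh.
  rewrite (Heq x) by (rewrite Rminus_diag, Rabs_R0; lra).
  rewrite (Heq (x+h)).
  - apply Hdel; auto. apply Rlt_le_trans with (1:=Hh). apply Rmin_l.
  - replace (x + h - x) with h by ring. apply Rlt_le_trans with (1:=Hh). apply Rmin_r.
Qed.

Lemma Rabs_le_inv : forall x y, Rabs x <= y -> - y <= x <= y.
Proof. intros x y H. pose proof (Rle_abs x). pose proof (Rle_abs (- x)).
  rewrite Rabs_Ropp in H1. lra. Qed.

Lemma mono : forall (F F' : R -> R) a b, a <= b ->
  (forall c, a <= c <= b -> derivable_pt_lim F c (F' c)) ->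
  (forall c, a <= c <= b -> 0 <= F' c) -> F a <= F b.
Proof.
  intros F F' a b Hab HD Hp. destruct (Rle_lt_or_eq_dec a b Hab) as [Hlt| ->]; [|lra].
  destruct (MVT_cor2 F F' a b) as [c [Hc1 Hc2]]; [lra|auto|].
  assert (0 <= F' c) by (apply Hp; lra). nra.
Qed.

Lemma const_int : forall (F F' : R -> R) a b, a <= b ->
  (forall c, a <= c <= b -> derivable_pt_lim F c (F' c)) ->
  (forall c, a <= c <= b -> F' c = 0) -> F a = F b.
Proof.
  intros F F' a b Hab HD H0. apply Rle_antisym.
  - apply (mono F F'); auto. intros c Hc; rewrite H0; lra.
  - assert (- F a <= - F b); [|lra].
    apply (mono (fun x => - F x) (fun x => - F' x)); auto.
    + intros c Hc; apply derivable_pt_lim_opp; auto.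
    + intros c Hc; rewrite H0; lra.
Qed.

Lemma cmp_int : forall (F F' H H' : R -> R) a b, a <= b ->
  (forall c, a <= c <= b -> derivable_pt_lim F c (F' c)) ->
  (forall c, a <= c <= b -> derivable_pt_lim H c (H' c)) ->
  (forall c, a <= c <= b -> Rabs (F' c) <= H' c) ->
  Rabs (F b - F a) <= H b - H a.
Proof.
  intros F F' H H' a b Hab HF HH Hb.
  assert (H1 : (fun x => H x - F x) a <= (fun x => H x - F x) b).
  { apply (mono (fun x => H x - F x) (fun x => H' x - F' x)); auto.
    - intros c Hc; apply derivable_pt_lim_minus; auto.
    - intros c Hc; specialize (Hb c Hc); apply Rabs_le_inv in Hb; lra. }
  assert (H2 : (fun x => H x + F x) a <= (fun x => H x + F x) b).
  { apply (mono (fun x => H x + F x) (fun x => H' x + F' x)); auto.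
    - intros c Hc; apply derivable_pt_lim_plus; auto.
    - intros c Hc; specialize (Hb c Hc); apply Rabs_le_inv in Hb; lra. }
  simpl in *. apply Rabs_le; lra.
Qed.

Lemma FTC_cont : forall (g F : R -> R) a b (pr : Riemann_integrable g a b), a <= b ->
  (forall x, a <= x <= b -> continuity_pt g x) ->
  (forall x, a <= x <= b -> derivable_pt_lim F x (g x)) ->
  RiemannInt pr = F b - F a.
Proof.
  intros g F a b pr Hab Hc HF.
  set (Pr := primitive Hab (FTC_P1 Hab Hc)).
  assert (HP : forall x, a <= x <= b -> derivable_pt_lim Pr x (g x))
    by (intros; apply RiemannInt_P28; auto).
  assert (E : (fun x => F x - Pr x) a = (fun x => F x - Pr x) b).
  { apply (const_int (fun x => F x - Pr x) (fun x => g x - g x)); auto.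
    - intros; apply derivable_pt_lim_minus; auto.
    - intros; ring. }
  simpl in E.
  assert (Pb : Pr b = RiemannInt pr).
  { unfold Pr, primitive. destruct (Rle_dec a b); [|exfalso; lra].
    destruct (Rle_dec b b); [|exfalso; lra]. apply RiemannInt_P5. }
  assert (Pa : Pr a = 0).
  { unfold Pr, primitive. destruct (Rle_dec a a); [|exfalso; lra].
    destruct (Rle_dec a b); [|exfalso; lra]. apply RiemannInt_P9. }
  lra.
Qed.

Lemma integrable_cont : forall g a b, continuity g -> Riemann_integrable g a b.
Proof.
  intros g a b Hc. destruct (Rle_dec a b).
  - apply continuity_implies_RiemannInt; auto.
  - apply RiemannInt_P1, continuity_implies_RiemannInt; [lra|auto].
Qed.

Definition prim (g : R -> R) (t : R) : R :=
  match excluded_middle_informative (inhabited (Riemann_integrable g 0 t)) with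
  | left H => RiemannInt (epsilon H (fun _ => True))
  | right _ => 0
  end.

Lemma prim_val : forall g t (pr : Riemann_integrable g 0 t), prim g t = RiemannInt pr.
Proof.
  intros g t pr. unfold prim.
  destruct (excluded_middle_informative _) as [H|H].
  - apply RiemannInt_P5.
  - exfalso; apply H; constructor; exact pr.
Qed.

Lemma prim0 : forall g, prim g 0 = 0.
Proof. intros g. rewrite (prim_val g 0 (RiemannInt_P7 g 0)). apply RiemannInt_P9. Qed.

Lemma prim_deriv : forall g, continuity g -> forall x, derivable_pt_lim (prim g) x (g x).
Proof.
  intros g Hc x.
  set (a := - Rabs x - 1). set (b := Rabs x + 1).
  assert (Hab : a <= b) by (unfold a, b; pose proof (Rabs_pos x); lra).
  assert (Hc' : forall y, a <= y <= b -> continuity_pt g y) by auto.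
  set (Pr := primitive Hab (FTC_P1 Hab Hc')).
  apply deriv_local with (g := fun y => Pr y - Pr 0) (d := 1); [lra| |].
  - intros y Hy.
    assert (Hy' : a <= y <= b).
    { unfold a, b. apply Rabs_def2 in Hy. pose proof (Rabs_pos x).
      destruct (Rcase_abs x) as [Hx|Hx]; [rewrite Rabs_left by lra|rewrite Rabs_right by lra]; lra. }
    assert (H0 : a <= 0 <= b) by (unfold a, b; pose proof (Rabs_pos x); lra).
    assert (Py : Pr y = RiemannInt (integrable_cont g a y Hc)).
    { unfold Pr, primitive. destruct (Rle_dec a y); [|exfalso; lra].
      destruct (Rle_dec y b); [|exfalso; lra]. apply RiemannInt_P5. }
    assert (P0 : Pr 0 = RiemannInt (integrable_cont g a 0 Hc)).
    { unfold Pr, primitive. destruct (Rle_dec a 0); [|exfalso; lra].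
      destruct (Rle_dec 0 b); [|exfalso; lra]. apply RiemannInt_P5. }
    rewrite Py, P0, (prim_val g y (integrable_cont g 0 y Hc)).
    rewrite <- (RiemannInt_P26 (integrable_cont g a 0 Hc) (integrable_cont g 0 y Hc)
       (integrable_cont g a y Hc)). ring.
  - replace (g x) with (g x - 0) by ring.
    apply derivable_pt_lim_minus; [|apply derivable_pt_lim_const].
    apply RiemannInt_P28. unfold a, b. pose proof (Rabs_pos x).
    destruct (Rcase_abs x) as [Hx|Hx]; [rewrite Rabs_left by lra|rewrite Rabs_right by lra]; lra.
Qed.

Fixpoint psum (a : nat -> R) (n : nat) : R :=
  match n with O => 0 | S n => psum a n + a n end.

Lemma psum_S : forall a n, psum a (S n) = sum_f_R0 a n.
Proof. intros a n; induction n; simpl in *; [ring|rewrite <- IHn; reflexivity]. Qed.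

Lemma Un_cv_unshift : forall v l, Un_cv (fun n => v (S n)) l -> Un_cv v l.
Proof.
  intros v l H eps He. destruct (H eps He) as [N HN]. exists (S N). intros n Hn.
  destruct n; [lia|]. apply HN; lia.
Qed.

Lemma Un_cv_shift : forall v l, Un_cv v l -> Un_cv (fun n => v (S n)) l.
Proof.
  intros v l H eps He. destruct (H eps He) as [N HN]. exists N. intros n Hn.
  apply HN; lia.
Qed.

Lemma lim_le_bound : forall v l c B m, Un_cv v l ->
  (forall n, (m <= n)%nat -> Rabs (v n - c) <= B) -> Rabs (l - c) <= B.
Proof.
  intros v l c B m Hv Hb. destruct (Rle_dec (Rabs (l - c)) B) as [H|H]; auto.
  exfalso. destruct (Hv (Rabs (l - c) - B)) as [N HN]; [lra|].
  specialize (HN (max N m) (Nat.le_max_l _ _)). specialize (Hb (max N m) (Nat.le_max_r _ _)).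
  unfold Rdist in HN.
  pose proof (Rabs_triang (l - v (max N m)) (v (max N m) - c)).
  replace (l - v (max N m) + (v (max N m) - c)) with (l - c) in H0 by ring.
  rewrite <- Rabs_Ropp in HN. replace (- (v (max N m) - l)) with (l - v (max N m)) in HN by ring.
  lra.
Qed.

Definition limf (u : nat -> R -> R) (x : R) : R :=
  match excluded_middle_informative (exists l, Un_cv (fun k => u k x) l) with
  | left H => proj1_sig (constructive_indefinite_description _ H)
  | right _ => 0
  end.

Lemma limf_spec : forall u x, (exists l, Un_cv (fun k => u k x) l) ->
  Un_cv (fun k => u k x) (limf u x).
Proof.
  intros u x H. unfold limf. destruct (excluded_middle_informative _) as [H'|H'].
  - exact (proj2_sig (constructive_indefinite_description _ H')).
  - contradiction.
Qed.

Section Conv.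
Variables (u : nat -> R -> R) (a : nat -> R) (s : R) (r : posreal).
Hypothesis Ha : forall k x, Boule 0 r x -> Rabs (u (S k) x - u k x) <= a k.
Hypothesis Ha0 : forall k, 0 <= a k.
Hypothesis Hs : Un_cv (fun n => sum_f_R0 a n) s.

Lemma ps_cv : Un_cv (psum a) s.
Proof. apply Un_cv_unshift. intros eps He. destruct (Hs eps He) as [N HN].
  exists N; intros n Hn. rewrite psum_S. apply (HN n Hn). Qed.

Lemma ps_le : forall n, psum a n <= s.
Proof. apply growing_ineq; [intro n; simpl; pose proof (Ha0 n); lra|apply ps_cv]. Qed.

Lemma ps_mono : forall m p, psum a m <= psum a (m + p).
Proof. intros m p; induction p; [rewrite Nat.add_0_r; lra|].
  rewrite Nat.add_succ_r; simpl; pose proof (Ha0 (m+p)); lra. Qed.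

Lemma tel : forall x m p, Boule 0 r x ->
  Rabs (u (m + p)%nat x - u m x) <= psum a (m + p) - psum a m.
Proof.
  intros x m p Hx; induction p.
  - rewrite Nat.add_0_r, Rminus_diag, Rabs_R0; lra.
  - rewrite Nat.add_succ_r. simpl.
    pose proof (Ha (m + p) x Hx).
    pose proof (Rabs_triang (u (S (m + p)) x - u (m + p)%nat x) (u (m + p)%nat x - u m x)).
    replace (u (S (m + p)) x - u (m + p)%nat x + (u (m + p)%nat x - u m x)) with
      (u (S (m + p)) x - u m x) in H0 by ring. lra.
Qed.

Lemma tail_b : forall x n m, Boule 0 r x -> (m <= n)%nat ->
  Rabs (u n x - u m x) <= s - psum a m.
Proof.
  intros x n m Hx Hmn. replace n with (m + (n - m))%nat by lia.
  pose proof (tel x m (n - m) Hx). pose proof (ps_le (m + (n - m))). lra.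
Qed.

Lemma conv_pt : forall x, Boule 0 r x -> Un_cv (fun k => u k x) (limf u x).
Proof.
  intros x Hx. apply limf_spec.
  destruct (R_complete (fun k => u k x)) as [l Hl]; [|exists l; exact Hl].
  intros eps He. destruct (ps_cv (eps/2)) as [N HN]; [lra|].
  exists N. intros n m Hn Hm. unfold Rdist.
  pose proof (tail_b x n N Hx Hn). pose proof (tail_b x m N Hx Hm).
  specialize (HN N (le_n _)). unfold Rdist in HN. pose proof (ps_le N).
  rewrite Rabs_left1 in HN by lra.
  pose proof (Rabs_triang (u n x - u N x) (u N x - u m x)).
  rewrite <- Rabs_Ropp in H0 at 1. replace (- (u m x - u N x)) with (u N x - u m x) in H0 by ring.
  replace (u n x - u N x + (u N x - u m x)) with (u n x - u m x) in H2 by ring. lra.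
Qed.

Lemma conv_unif : CVU u (limf u) 0 r.
Proof.
  intros eps He. destruct (ps_cv eps He) as [N HN]. exists N. intros n y Hn Hy.
  specialize (HN N (le_n _)). unfold Rdist in HN. pose proof (ps_le N).
  rewrite Rabs_left1 in HN by lra.
  assert (Rabs (limf u y - u n y) <= s - psum a n).
  { apply (lim_le_bound (fun k => u k y) _ _ _ n); [apply conv_pt; auto|].
    intros k Hk; apply tail_b; auto. }
  pose proof (ps_mono N (n - N)). replace (N + (n - N))%nat with n in H1 by lia. lra.
Qed.
End Conv.

Definition bnd (c : R) (n : nat) (t : R) : R := c * Rabs t ^ n / INR (fact n).

Lemma fact_S_INR : forall n, INR (fact (S n)) = INR (S n) * INR (fact n).
Proof. intros; rewrite fact_simpl, mult_INR; reflexivity. Qed.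

Lemma int_bound_pos : forall F g c n t, 0 <= t ->
  (forall x, derivable_pt_lim F x (g x)) -> F 0 = 0 ->
  (forall u, 0 <= u <= t -> Rabs (g u) <= c * u ^ n / INR (fact n)) ->
  Rabs (F t) <= c * t ^ (S n) / INR (fact (S n)).
Proof.
  intros F g c n t Ht HF F0 Hb.
  pose proof (INR_fact_lt_0 n) as Hf. pose proof (pos_INR n) as Hn.
  assert (Hcmp := cmp_int F g (fun u => c / INR (fact (S n)) * u ^ (S n))
                  (fun u => c * u ^ n / INR (fact n)) 0 t Ht).
  rewrite F0, Rminus_0_r, pow_i in Hcmp by lia.
  replace (c * t ^ S n / INR (fact (S n))) with
    (c / INR (fact (S n)) * t ^ S n - c / INR (fact (S n)) * 0) by (field; apply INR_fact_neq_0).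
  apply Hcmp; auto.
  intros u Hu. apply dl_eq with (c / INR (fact (S n)) * (INR (S n) * u ^ pred (S n))).
  - apply dl_scal, dl_pow.
  - simpl pred. rewrite fact_S_INR. field. split; [lra|]. rewrite S_INR; lra.
Qed.

Lemma int_bound : forall F g c n t,
  (forall x, derivable_pt_lim F x (g x)) -> F 0 = 0 ->
  (forall u, Rabs u <= Rabs t -> Rabs (g u) <= bnd c n u) ->
  Rabs (F t) <= bnd c (S n) t.
Proof.
  intros F g c n t HF F0 Hb. unfold bnd in *.
  destruct (Rle_dec 0 t) as [Ht|Ht].
  - rewrite (Rabs_right t) by lra. apply int_bound_pos with (g := g); auto.
    intros u Hu. replace (u ^ n) with (Rabs u ^ n) by (rewrite Rabs_right; lra). apply Hb.
    rewrite !Rabs_right; lra.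
  - rewrite (Rabs_left t) by lra.
    replace (F t) with (- (fun s => - F (- s)) (- t)) by (cbv beta; rewrite !Ropp_involutive; reflexivity).
    rewrite Rabs_Ropp. apply (int_bound_pos (fun s => - F (- s)) (fun s => g (- s))); [lra| | |].
    + intros x. apply dl_eq with (- - g (- x)); [|apply Ropp_involutive].
      apply dl_opp, dl_neg, HF.
    + simpl. rewrite Ropp_0, F0; ring.
    + intros u Hu. replace (u ^ n) with (Rabs (- u) ^ n) by (rewrite Rabs_Ropp, Rabs_right; lra). apply Hb.
      rewrite Rabs_Ropp, (Rabs_left t), Rabs_right; lra.
Qed.

Section Picard.
Variable q : R -> R.
Hypothesis Hq : continuity q.

Fixpoint yk (k : nat) : R -> R :=
  match k with
  | O => fun t => t
  | S k => fun t => t + prim (prim (fun u => q u * yk k u)) t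
  end.
Definition y1k (k : nat) : R -> R :=
  match k with
  | O => fun _ => 1
  | S k => fun t => 1 + prim (fun u => q u * yk k u) t
  end.
Definition y2k (k : nat) : R -> R :=
  match k with
  | O => fun _ => 0
  | S k => fun t => q t * yk k t
  end.

Lemma yk_der : forall k, continuity (yk k) /\
  (forall x, derivable_pt_lim (yk k) x (y1k k x)) /\
  (forall x, derivable_pt_lim (y1k k) x (y2k k x)).
Proof.
  induction k as [|k [Hc [H1 H2]]].
  - split; [|split]; simpl.
    + apply deriv_cont with (fun _ => 1). apply dl_id.
    + apply dl_id.
    + intros; apply dl_const.
  - assert (Hg : continuity (fun u => q u * yk k u)) by (apply cont_mult; auto).
    pose proof (prim_deriv _ Hg) as D1.
    assert (Hg' : continuity (prim (fun u => q u * yk k u))) by (eapply deriv_cont; eauto).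
    pose proof (prim_deriv _ Hg') as D2.
    assert (D : forall x, derivable_pt_lim (yk (S k)) x (y1k (S k) x)).
    { intros x; simpl. apply dl_plus; [apply dl_id|apply D2]. }
    split; [|split]; auto.
    + eapply deriv_cont; eauto.
    + intros x; simpl. apply dl_eq with (0 + q x * yk k x); [|ring].
      apply dl_plus; [apply dl_const|apply D1].
Qed.

Lemma yk0 : forall k, yk k 0 = 0.
Proof. destruct k; simpl; [auto|rewrite prim0; ring]. Qed.
Lemma y1k0 : forall k, y1k k 0 = 1.
Proof. destruct k; simpl; [auto|rewrite prim0; ring]. Qed.

Variables (T Q : R).
Hypothesis HQ : forall u, Rabs u <= T -> Rabs (q u) <= Q.
Hypothesis HQ0 : 0 <= Q.

Lemma it_bound : forall k t, Rabs t <= T ->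
  Rabs (y2k (S k) t - y2k k t) <= bnd (Q ^ S k) (S (2 * k)) t /\
  Rabs (y1k (S k) t - y1k k t) <= bnd (Q ^ S k) (S (S (2 * k))) t /\
  Rabs (yk (S k) t - yk k t) <= bnd (Q ^ S k) (S (S (S (2 * k)))) t.
Proof.
  assert (Hstep : forall k, (forall t, Rabs t <= T ->
      Rabs (y2k (S k) t - y2k k t) <= bnd (Q ^ S k) (S (2 * k)) t) ->
    forall t, Rabs t <= T ->
    Rabs (y1k (S k) t - y1k k t) <= bnd (Q ^ S k) (S (S (2 * k))) t /\
    Rabs (yk (S k) t - yk k t) <= bnd (Q ^ S k) (S (S (S (2 * k)))) t).
  { intros k H2 t Ht.
    destruct (yk_der k) as [_ [Da Db]]. destruct (yk_der (S k)) as [_ [Dc Dd]].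
    assert (B1 : forall u, Rabs u <= Rabs t ->
              Rabs (y1k (S k) u - y1k k u) <= bnd (Q ^ S k) (S (S (2 * k))) u).
    { intros u Hu. apply (int_bound (fun u => y1k (S k) u - y1k k u) (fun u => y2k (S k) u - y2k k u)).
      - intros x; apply dl_minus; auto.
      - rewrite !y1k0; ring.
      - intros v Hv; apply H2; lra. }
    split; [apply B1; lra|].
    apply (int_bound (fun u => yk (S k) u - yk k u) (fun u => y1k (S k) u - y1k k u)).
    - intros x; apply dl_minus; auto.
    - rewrite !yk0; ring.
    - intros v Hv; apply B1; lra. }
  assert (H2 : forall k t, Rabs t <= T ->
      Rabs (y2k (S k) t - y2k k t) <= bnd (Q ^ S k) (S (2 * k)) t).
  { induction k; intros t Ht.
    - simpl. unfold bnd. simpl. rewrite Rminus_0_r, Rabs_mult.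
      replace (Q * 1 * (Rabs t * 1) / 1) with (Q * Rabs t) by field.
      apply Rmult_le_compat_r; [apply Rabs_pos|auto].
    - change (y2k (S (S k)) t) with (q t * yk (S k) t); change (y2k (S k) t) with (q t * yk k t). destruct (Hstep k IHk t Ht) as [_ H3].
      replace (q t * yk (S k) t - q t * yk k t) with (q t * (yk (S k) t - yk k t)) by ring.
      rewrite Rabs_mult. replace (S (2 * S k)) with (S (S (S (2 * k)))) by lia.
      unfold bnd in *. replace (Q ^ S (S k)) with (Q * Q ^ S k) by (simpl; ring).
      unfold Rdiv. rewrite Rmult_assoc, Rmult_assoc.
      apply Rmult_le_compat; auto using Rabs_pos. rewrite <- Rmult_assoc. exact H3. }
  intros k t Ht. split; [apply H2; auto|]. apply Hstep; auto.
Qed.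
End Picard.

Lemma bnd_le : forall c n j t T, 0 <= c -> Rabs t <= T -> (j <= n)%nat ->
  bnd c n t <= c * T ^ n / INR (fact j).
Proof.
  intros c n j t T Hc Ht Hj. unfold bnd, Rdiv.
  pose proof (INR_fact_lt_0 j). pose proof (INR_fact_lt_0 n).
  assert (INR (fact j) <= INR (fact n)) by (apply le_INR, fact_le; auto).
  apply Rmult_le_compat; [apply Rmult_le_pos; [auto|apply pow_le, Rabs_pos]
    | left; apply Rinv_0_lt_compat; auto | | apply Rinv_le_contravar; auto].
  apply Rmult_le_compat_l; auto. apply pow_maj_Rabs. rewrite Rabs_Rabsolu; auto.
Qed.

Lemma sum_shift_exp : forall (b : nat -> R) c n,
  sum_f_R0 (fun k => c * b (S k)) n = c * (sum_f_R0 b (S n) - b O).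
Proof. intros b c n; induction n; simpl in *; [ring|rewrite IHn; ring]. Qed.

Lemma cv_const : forall c, Un_cv (fun _ => c) c.
Proof. intros c eps He; exists O; intros; unfold Rdist; rewrite Rminus_diag, Rabs_R0; lra. Qed.

Lemma exp_series_cv : forall A c, Un_cv (fun n => sum_f_R0 (fun k => c * (/ INR (fact (S k)) * A ^ S k)) n) (c * (exp A - 1)).
Proof.
  intros A c.
  assert (E : Un_cv (fun n => sum_f_R0 (fun i => / INR (fact i) * A ^ i) n) (exp A)).
  { unfold exp. destruct (exist_exp A) as [l Hl]. simpl. exact Hl. }
  apply Un_cv_shift in E.
  intros eps He. destruct (CV_mult _ _ _ _ (cv_const c) (CV_minus _ _ _ _ E (cv_const 1)) eps He) as [N HN].
  exists N; intros n Hn. rewrite (sum_shift_exp (fun i => / INR (fact i) * A ^ i)).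
  simpl (/ INR (fact 0) * A ^ 0). replace (/ 1 * 1) with 1 by field. apply HN; auto.
Qed.

Section Exist.
Variable q : R -> R.
Hypothesis Hq : continuity q.

Definition Msol := limf (yk q).
Definition M1sol := limf (y1k q).

Lemma bound_Q : forall T, 0 <= T -> exists Q, 0 <= Q /\ forall u, Rabs u <= T -> Rabs (q u) <= Q.
Proof.
  intros T HT. destruct (continuity_ab_maj (fun u => Rabs (q u)) (- T) T) as [x [Hx _]]; [lra| |].
  - intros c _. apply (continuity_comp q Rabs); [apply Hq|apply Rcontinuity_abs].
  - exists (Rabs (q x)); split; [apply Rabs_pos|]. intros u Hu. apply Hx.
    apply Rabs_le_inv; auto.
Qed.

Lemma ball_conv : forall r : posreal,
  CVU (yk q) Msol 0 r /\ CVU (y1k q) M1sol 0 r /\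
  (forall x, Boule 0 r x -> Un_cv (fun k => yk q k x) (Msol x)) /\
  (forall x, Boule 0 r x -> Un_cv (fun k => y1k q k x) (M1sol x)) /\
  exists Q, 0 <= Q /\ forall u, Boule 0 r u -> Rabs (q u) <= Q.
Proof.
  intros r. set (T := pos r). assert (HT : 0 <= T) by (unfold T; destruct r; simpl; lra).
  destruct (bound_Q T HT) as [Q [HQ0 HQ]].
  set (A := Q * T ^ 2).
  set (a := fun k => (1 + T) * (/ INR (fact (S k)) * A ^ S k)).
  assert (Ha0 : forall k, 0 <= a k).
  { intros k; unfold a, A. apply Rmult_le_pos; [lra|]. apply Rmult_le_pos.
    - left; apply Rinv_0_lt_compat, INR_fact_lt_0.
    - apply pow_le, Rmult_le_pos; auto. apply pow_le; auto. }
  assert (Hcv : Un_cv (fun n => sum_f_R0 a n) ((1 + T) * (exp A - 1))) by apply exp_series_cv.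
  assert (Hball : forall y, Boule 0 r y -> Rabs y <= T).
  { intros y Hy. unfold Boule in Hy. rewrite Rminus_0_r in Hy. unfold T; lra. }
  assert (Hpow : forall k, Q ^ S k * T ^ S (S (2 * k)) = A ^ S k).
  { intros k. unfold A. rewrite Rpow_mult_distr, <- pow_mult.
    replace (2 * S k)%nat with (S (S (2 * k))) by lia. reflexivity. }
  assert (B1 : forall k y, Boule 0 r y -> Rabs (y1k q (S k) y - y1k q k y) <= a k).
  { intros k y Hy. destruct (it_bound q Hq T Q HQ k y (Hball y Hy)) as [_ [H _]].
    eapply Rle_trans; [apply H|]. eapply Rle_trans.
    - apply (bnd_le _ _ (S k) y T); [apply pow_le; auto|apply Hball; auto|lia].
    - unfold a. rewrite Hpow. pose proof (INR_fact_lt_0 (S k)).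
      assert (0 <= A ^ S k) by (unfold A; apply pow_le, Rmult_le_pos; auto; apply pow_le; auto).
      unfold Rdiv. rewrite (Rmult_comm (A ^ S k)).
      rewrite <- (Rmult_1_l (/ INR (fact (S k)) * A ^ S k)) at 1.
      apply Rmult_le_compat_r; [apply Rmult_le_pos; [left; apply Rinv_0_lt_compat|]; auto|lra]. }
  assert (B0 : forall k y, Boule 0 r y -> Rabs (yk q (S k) y - yk q k y) <= a k).
  { intros k y Hy. destruct (it_bound q Hq T Q HQ k y (Hball y Hy)) as [_ [_ H]].
    eapply Rle_trans; [apply H|]. eapply Rle_trans.
    - apply (bnd_le _ _ (S k) y T); [apply pow_le; auto|apply Hball; auto|lia].
    - unfold a. replace (T ^ S (S (S (2 * k)))) with (T * T ^ S (S (2 * k))) by (simpl; ring).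
      replace (Q ^ S k * (T * T ^ S (S (2 * k)))) with (T * (Q ^ S k * T ^ S (S (2 * k)))) by ring.
      rewrite Hpow. pose proof (INR_fact_lt_0 (S k)).
      assert (0 <= A ^ S k) by (unfold A; apply pow_le, Rmult_le_pos; auto; apply pow_le; auto).
      unfold Rdiv. rewrite Rmult_assoc, (Rmult_comm (A ^ S k)).
      apply Rmult_le_compat_r; [apply Rmult_le_pos; [left; apply Rinv_0_lt_compat|]; auto|lra]. }
  split; [apply (conv_unif _ a _ r B0 Ha0 Hcv)|].
  split; [apply (conv_unif _ a _ r B1 Ha0 Hcv)|].
  split; [apply (conv_pt _ a _ r B0 Ha0 Hcv)|].
  split; [apply (conv_pt _ a _ r B1 Ha0 Hcv)|].
  exists Q; split; auto.
Qed.
End Exist.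

Lemma cv_eventually : forall (v : nat -> R) c, (forall k, v k = c) -> Un_cv v c.
Proof. intros v c H eps He; exists O; intros; unfold Rdist; rewrite H, Rminus_diag, Rabs_R0; lra. Qed.

Lemma exist_sol : forall q, continuity q ->
  (forall x, derivable_pt_lim (Msol q) x (M1sol q x)) /\
  (forall x, derivable_pt_lim (M1sol q) x (q x * Msol q x)) /\
  Msol q 0 = 0 /\ M1sol q 0 = 1.
Proof.
  intros q Hq.
  assert (Hr : forall x, 0 < Rabs x + 1) by (intros x; pose proof (Rabs_pos x); lra).
  assert (Hb : forall x, Boule 0 (mkposreal _ (Hr x)) x).
  { intros x; unfold Boule; simpl; rewrite Rminus_0_r; lra. }
  split; [|split; [|split]].
  - intros x. destruct (ball_conv q Hq (mkposreal _ (Hr x))) as [C0 [C1 [P0 [P1 _]]]].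
    apply (CVU_derivable (yk q) (y1k q) (Msol q) (M1sol q) 0 (mkposreal _ (Hr x))); auto.
    intros n y _. apply (yk_der q Hq n).
  - intros x. destruct (ball_conv q Hq (mkposreal _ (Hr x))) as [C0 [C1 [P0 [P1 [Q [HQ0 HQ]]]]]].
    apply (CVU_derivable (fun k => y1k q (S k)) (fun k => y2k q (S k)) (M1sol q)
             (fun t => q t * Msol q t) 0 (mkposreal _ (Hr x))); auto.
    + intros eps He. destruct (C0 (eps / (Q + 1))) as [N HN].
      { apply Rdiv_lt_0_compat; lra. }
      exists N. intros n y Hn Hy. change (y2k q (S n) y) with (q y * yk q n y).
      replace (q y * Msol q y - q y * yk q n y) with (q y * (Msol q y - yk q n y)) by ring.
      rewrite Rabs_mult. specialize (HN n y Hn Hy). specialize (HQ y Hy).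
      apply Rle_lt_trans with (Q * (eps / (Q + 1))).
      * apply Rmult_le_compat; auto using Rabs_pos. lra.
      * unfold Rdiv. rewrite <- Rmult_assoc. rewrite <- (Rmult_1_l eps) at 2.
        replace (Q * eps * / (Q + 1)) with ((Q / (Q + 1)) * eps) by (field; lra).
        apply Rmult_lt_compat_r; [lra|]. apply Rmult_lt_reg_r with (Q + 1); [lra|].
        unfold Rdiv; rewrite Rmult_assoc, Rinv_l; lra.
    + intros y Hy. apply (Un_cv_shift (fun k => y1k q k y)). auto.
    + intros n y _. apply (yk_der q Hq (S n)).
  - apply (UL_sequence (fun k => yk q k 0)).
    + destruct (ball_conv q Hq (mkposreal _ (Hr 0))) as [_ [_ [P0 _]]]. apply P0, Hb.
    + apply cv_eventually. apply yk0.
  - apply (UL_sequence (fun k => y1k q k 0)).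
    + destruct (ball_conv q Hq (mkposreal _ (Hr 0))) as [_ [_ [_ [P1 _]]]]. apply P1, Hb.
    + apply cv_eventually. apply y1k0.
Qed.

Lemma prim_nonneg : forall g t, continuity g -> 0 <= t ->
  (forall u, 0 <= u <= t -> 0 <= g u) -> 0 <= prim g t.
Proof.
  intros g t Hg Ht Hp. rewrite <- (prim0 g). apply (mono (prim g) g); auto.
  intros; apply prim_deriv; auto.
Qed.

Lemma sol_ge : forall q, continuity q -> (forall t, 0 <= t -> 0 <= q t) ->
  forall t, 0 <= t -> t <= Msol q t.
Proof.
  intros q Hq Hq0 t Ht.
  assert (Hk : forall k u, 0 <= u -> u <= yk q k u).
  { induction k; intros u Hu; simpl; [lra|].
    destruct (yk_der q Hq k) as [Hc _].
    assert (Hg : continuity (fun v => q v * yk q k v)) by (apply cont_mult; auto).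
    assert (0 <= prim (prim (fun v => q v * yk q k v)) u); [|lra].
    apply prim_nonneg; auto.
    - eapply deriv_cont; apply prim_deriv; auto.
    - intros w Hw. apply prim_nonneg; auto; [lra|].
      intros v Hv. apply Rmult_le_pos; [apply Hq0; lra|]. specialize (IHk v). lra. }
  assert (Hr : 0 < Rabs t + 1) by (pose proof (Rabs_pos t); lra).
  destruct (ball_conv q Hq (mkposreal _ Hr)) as [_ [_ [P0 _]]].
  apply Rle_cv_lim with (Un := fun _ => t) (Vn := fun k => yk q k t).
  - intro n; apply Hk; auto.
  - apply cv_const.
  - apply P0. unfold Boule; simpl; rewrite Rminus_0_r; pose proof (Rle_abs t); lra.
Qed.

Definition solq (q m m1 : R -> R) : Prop :=
  (forall x, derivable_pt_lim m x (m1 x)) /\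
  (forall x, derivable_pt_lim m1 x (q x * m x)).

Lemma uniq_sol : forall q m m1 n n1, continuity q -> (forall t, 0 <= q t) ->
  solq q m m1 -> solq q n n1 -> m 0 = n 0 -> m1 0 = n1 0 ->
  forall t, m t = n t.
Proof.
  intros q m m1 n n1 Hq Hq0 [Hm Hm1] [Hn Hn1] E0 E1 t.
  set (D := fun s => m s - n s). set (D1 := fun s => m1 s - n1 s).
  set (E := fun s => D s ^ 2 + D1 s ^ 2).
  set (E' := fun s => 2 * D s * D1 s + 2 * D1 s * (q s * D s)).
  assert (HD : forall x, derivable_pt_lim D x (D1 x)) by (intros; apply dl_minus; auto).
  assert (HD1 : forall x, derivable_pt_lim D1 x (q x * D x)).
  { intros; unfold D. apply dl_eq with (q x * m x - q x * n x); [apply dl_minus; auto|ring]. }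
  assert (HE : forall x, derivable_pt_lim E x (E' x)).
  { intros x. unfold E, E'. apply dl_eq with (INR 2 * D x ^ pred 2 * D1 x + INR 2 * D1 x ^ pred 2 * (q x * D x)).
    - apply dl_plus; apply (dl_comp _ (fun y => y ^ 2)); auto; apply dl_pow.
    - simpl; ring. }
  assert (E00 : E 0 = 0) by (unfold E, D, D1; rewrite E0, E1; ring).
  assert (HEp : forall s, 0 <= E s) by (intros; unfold E; nra).
  assert (HT : 0 <= Rabs t) by apply Rabs_pos.
  destruct (bound_Q q Hq (Rabs t) HT) as [Q [HQ0 HQ]].
  set (l := 1 + Q).
  assert (Hineq : forall s, Rabs s <= Rabs t -> - (l * E s) <= E' s <= l * E s).
  { intros s Hs. specialize (HQ s Hs). specialize (Hq0 s). rewrite Rabs_right in HQ by lra.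
    unfold E', E, l. set (a := D s). set (b := D1 s). set (c := q s) in *.
    assert (0 <= (1 + c) * (a - b) ^ 2) by (apply Rmult_le_pos; [lra|apply pow2_ge_0]).
    assert (0 <= (1 + c) * (a + b) ^ 2) by (apply Rmult_le_pos; [lra|apply pow2_ge_0]).
    assert (0 <= (Q - c) * (a ^ 2 + b ^ 2)) by (apply Rmult_le_pos; [lra|pose proof (pow2_ge_0 a); pose proof (pow2_ge_0 b); lra]).
    split; nra. }
  assert (Et : E t = 0).
  { destruct (Rle_dec 0 t) as [Ht|Ht].
    - set (W := fun s => E s * exp (- l * s)).
      assert (W t <= W 0).
      { assert (- W 0 <= - W t); [|lra].
        apply (mono (fun s => - W s) (fun s => - (E' s * exp (- l * s) + E s * (exp (- l * s) * - l)))); auto.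
        - intros c _. apply dl_opp. unfold W. apply dl_eq with (E' c * exp (- l * c) + E c * (exp (- l * c) * (- l * 1))); [|ring].
          apply (dl_mult E (fun s => exp (- l * s))); auto. apply (dl_comp (fun s => - l * s) exp c (- l * 1) (exp (- l * c))); [apply dl_scal, dl_id|cbv beta; apply derivable_pt_lim_exp].
        - intros c Hc. assert (Rabs c <= Rabs t) by (rewrite !Rabs_right; lra).
          destruct (Hineq c H). pose proof (exp_pos (- l * c)). nra. }
      unfold W in H. rewrite E00 in H. pose proof (exp_pos (- l * t)). pose proof (HEp t). nra.
    - set (W := fun s => E s * exp (l * s)).
      assert (W t <= W 0).
      { apply (mono W (fun s => E' s * exp (l * s) + E s * (exp (l * s) * l))); [lra| |].
        - intros c _. unfold W. apply dl_eq with (E' c * exp (l * c) + E c * (exp (l * c) * (l * 1))); [|ring].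
          apply (dl_mult E (fun s => exp (l * s))); auto. apply (dl_comp (fun s => l * s) exp c (l * 1) (exp (l * c))); [apply dl_scal, dl_id|cbv beta; apply derivable_pt_lim_exp].
        - intros c Hc. assert (Rabs c <= Rabs t) by (rewrite !Rabs_left1; lra).
          destruct (Hineq c H). pose proof (exp_pos (l * c)). nra. }
      unfold W in H. rewrite E00 in H. pose proof (exp_pos (l * t)). pose proof (HEp t). nra. }
  unfold E, D in Et. nra.
Qed.

Lemma odd_sol : forall q m m1, (forall t, q (- t) = q t) -> solq q m m1 ->
  solq q (fun t => - m (- t)) (fun t => m1 (- t)).
Proof.
  intros q m m1 Hev [Hm Hm1]. split.
  - intros x. apply dl_eq with (- - m1 (- x)); [|ring]. apply dl_opp, dl_neg, Hm.
  - intros x. apply dl_eq with (- (q (- x) * m (- x))); [|rewrite Hev; ring]. apply dl_neg, Hm1.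
Qed.

Lemma exp_le : forall x y, x <= y -> exp x <= exp y.
Proof. intros x y H. destruct (Rle_lt_or_eq_dec _ _ H) as [H' | ->]; [left; apply exp_increasing; auto|lra]. Qed.

Lemma Rmax0_eq : forall a, Rmax a 0 = a - Rmin a 0.
Proof. intros a; unfold Rmax, Rmin; destruct (Rle_dec a 0); lra. Qed.

Lemma cont_Rmax0 : forall f, continuity f -> continuity (fun t => Rmax (f t) 0).
Proof.
  intros f Hf. replace (fun t => Rmax (f t) 0) with (fun t => f t + - Rmin (f t) 0).
  - apply cont_plus; auto. apply cont_opp, cont_Rmin0; auto.
  - apply functional_extensionality; intro; rewrite Rmax0_eq; ring.
Qed.

Lemma odd_deriv_even : forall f f1, (forall t, f (- t) = - f t) ->
  (forall x, derivable_pt_lim f x (f1 x)) -> forall x, f1 (- x) = f1 x.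
Proof.
  intros f f1 Hodd Hd x.
  assert (H1 : derivable_pt_lim (fun s => f (- s)) x (- f1 (- x))) by (apply dl_neg, Hd).
  assert (H2 : derivable_pt_lim (fun s => f (- s)) x (- f1 x)).
  { replace (fun s => f (- s)) with (fun s => - f s) by (apply functional_extensionality; intro; rewrite Hodd; auto).
    apply dl_opp, Hd. }
  pose proof (uniqueness_limite _ _ _ _ H1 H2). lra.
Qed.

Lemma even_deriv_odd : forall f f1, (forall t, f (- t) = f t) ->
  (forall x, derivable_pt_lim f x (f1 x)) -> forall x, f1 (- x) = - f1 x.
Proof.
  intros f f1 Hev Hd x.
  assert (H1 : derivable_pt_lim (fun s => f (- s)) x (- f1 (- x))) by (apply dl_neg, Hd).
  assert (H2 : derivable_pt_lim (fun s => f (- s)) x (f1 x)).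
  { replace (fun s => f (- s)) with f by (apply functional_extensionality; intro; rewrite Hev; auto).
    apply Hd. }
  pose proof (uniqueness_limite _ _ _ _ H1 H2). lra.
Qed.

Lemma improper_to_prim : forall g g' l, continuity g' -> (forall t, 0 < t -> g t = g' t) ->
  improper_int0 g l -> forall eps, 0 < eps -> exists B, 0 <= B /\ forall b, B <= b -> Rabs (prim g' b - l) < eps.
Proof.
  intros g g' l Hc Heq [Hi Hl] eps He.
  destruct (Hl eps He) as [B HB]. exists (Rmax B 0). split; [apply Rmax_r|].
  intros b Hb. assert (Hb0 : 0 <= b) by (pose proof (Rmax_r B 0); lra).
  destruct (Hi b Hb0) as [pr].
  assert (E : RiemannInt pr = prim g' b).
  { rewrite (RiemannInt_P18 pr (integrable_cont g' 0 b Hc) Hb0).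
    - rewrite (FTC_cont g' (prim g') 0 b); auto.
      + rewrite prim0; ring.
      + intros; apply prim_deriv; auto.
    - intros x Hx; apply Heq; lra. }
  rewrite <- E. apply HB. pose proof (Rmax_l B 0); lra.
Qed.

Lemma mono_lim : forall (h : R -> R) C, (forall a b, 0 <= a <= b -> h a <= h b) ->
  (forall b, 0 <= b -> h b <= C) ->
  exists L, forall eps, 0 < eps -> exists B, forall b, B <= b -> Rabs (h b - L) < eps.
Proof.
  intros h C Hm HC.
  set (E := fun x => exists b, 0 <= b /\ x = h b).
  destruct (completeness E) as [L [HL1 HL2]].
  - exists C. intros x [b [Hb ->]]. apply HC; auto.
  - exists (h 0). exists 0. split; [lra|auto].
  - exists L. intros eps He.
    assert (Hex : exists b0, 0 <= b0 /\ L - eps < h b0).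
    { apply NNPP. intros Hn. assert (L <= L - eps); [|lra].
      apply HL2. intros x [b [Hb ->]]. apply Rnot_lt_le. intros Hlt. apply Hn. exists b; auto. }
    destruct Hex as [b0 [Hb0 Hlt]]. exists b0. intros b Hb.
    assert (h b <= L) by (apply HL1; exists b; split; [lra|auto]).
    assert (h b0 <= h b) by (apply Hm; lra).
    apply Rabs_def1; lra.
Qed.

Lemma m_bound : forall q m m1 f Phi T0 kap Cp,
  (forall t, 0 <= q t) -> solq q m m1 -> m 0 = 0 -> m1 0 = 1 ->
  (forall t, 0 <= t -> t <= m t) -> 0 < T0 -> 0 < kap ->
  (forall x, derivable_pt_lim Phi x (q x * f x)) -> 0 <= Phi T0 ->
  (forall t, 0 <= t -> Phi t <= Cp) -> (forall t, T0 <= t -> t <= kap * f t) ->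
  (forall a b, 0 <= a <= b -> m1 a <= m1 b) /\ exists C, forall t, 0 <= t -> m1 t <= C.
Proof.
  intros q m m1 f Phi T0 kap Cp Hq0 [Hm Hm1] m0 m10 Hge HT0 Hk HPhi HP0 HPC Hf.
  assert (Hmono : forall a b, 0 <= a <= b -> m1 a <= m1 b).
  { intros a b Hab. apply (mono m1 (fun s => q s * m s)); [lra|auto|].
    intros c Hc. apply Rmult_le_pos; auto. specialize (Hge c). lra. }
  split; auto.
  assert (Hm1ge : forall t, 0 <= t -> 1 <= m1 t) by (intros; rewrite <- m10; apply Hmono; lra).
  assert (Hmt : forall t, 0 <= t -> m t <= t * m1 t).
  { intros t Ht. assert ((fun s => s * m1 s - m s) 0 <= (fun s => s * m1 s - m s) t); [|simpl in *; lra].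
    apply (mono (fun s => s * m1 s - m s) (fun s => (1 * m1 s + s * (q s * m s)) - m1 s)); auto.
    - intros c _. apply dl_minus; auto. apply (dl_mult (fun s => s) m1); auto. apply dl_id.
    - intros c Hc. specialize (Hge c (proj1 Hc)). specialize (Hq0 c).
      assert (0 <= c * (q c * m c)) by (apply Rmult_le_pos; [lra|apply Rmult_le_pos; lra]). lra. }
  set (W := fun s => m1 s * exp (- kap * Phi s)).
  set (W' := fun s => q s * m s * exp (- kap * Phi s) + m1 s * (exp (- kap * Phi s) * (- kap * (q s * f s)))).
  assert (HW : forall x, derivable_pt_lim W x (W' x)).
  { intros x. unfold W, W'. apply (dl_mult m1 (fun s => exp (- kap * Phi s))); auto.
    apply (dl_comp (fun s => - kap * Phi s) exp x (- kap * (q x * f x)) (exp (- kap * Phi x))).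
    - apply dl_scal; auto.
    - cbv beta; apply derivable_pt_lim_exp. }
  exists (m1 T0 / exp (- kap * Cp) + m1 T0). intros t Ht.
  pose proof (exp_pos (- kap * Cp)) as Hec.
  assert (0 <= m1 T0 / exp (- kap * Cp)).
  { unfold Rdiv; apply Rmult_le_pos; [specialize (Hm1ge T0); lra|left; apply Rinv_0_lt_compat; auto]. }
  destruct (Rle_dec T0 t) as [Htt|Htt]; [|assert (m1 t <= m1 T0) by (apply Hmono; lra); lra].
  assert (HWt : W t <= W T0).
  { assert (- W T0 <= - W t); [|lra].
    apply (mono (fun s => - W s) (fun s => - W' s)); auto.
    - intros; apply dl_opp; auto.
    - intros c Hc. unfold W'. pose proof (exp_pos (- kap * Phi c)) as He.
      assert (Hc0 : 0 <= c) by lra.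
      specialize (Hq0 c). specialize (Hge c Hc0). specialize (Hmt c Hc0). specialize (Hf c (proj1 Hc)).
      specialize (Hm1ge c Hc0).
      assert (q c * m c <= kap * (q c * f c) * m1 c).
      { apply Rle_trans with (q c * (c * m1 c)); [apply Rmult_le_compat_l; auto|].
        replace (kap * (q c * f c) * m1 c) with (q c * ((kap * f c) * m1 c)) by ring.
        apply Rmult_le_compat_l; auto. apply Rmult_le_compat_r; lra. }
      assert (0 <= exp (- kap * Phi c) * (kap * (q c * f c) * m1 c - q c * m c)) by (apply Rmult_le_pos; lra).
      nra. }
  unfold W in HWt.
  assert (E1 : exp (- kap * Phi T0) <= 1) by (rewrite <- exp_0; apply exp_le; nra).
  assert (E2 : exp (- kap * Cp) <= exp (- kap * Phi t)) by (apply exp_le; specialize (HPC t Ht); nra).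
  assert (m1 t * exp (- kap * Cp) <= m1 T0).
  { pose proof (Hm1ge t Ht). pose proof (Hm1ge T0). 
    apply Rle_trans with (m1 t * exp (- kap * Phi t)); [apply Rmult_le_compat_l; lra|].
    apply Rle_trans with (1 := HWt). pose proof (exp_pos (- kap * Phi T0)). nra. }
  assert (m1 t <= m1 T0 / exp (- kap * Cp)).
  { apply Rmult_le_reg_r with (exp (- kap * Cp)); auto. unfold Rdiv; rewrite Rmult_assoc, Rinv_l; lra. }
  specialize (Hm1ge T0). lra.
Qed.

Lemma f_analysis : forall (f G b1 b2 : R -> R),
  (forall t, 0 < t -> 0 < f t) -> continuity G ->
  (forall t, derivable_pt_lim f t (b1 t)) -> (forall t, derivable_pt_lim b1 t (b2 t)) ->
  (forall t, b2 t + G t * f t = 0) -> f 0 = 0 -> b1 0 = 1 ->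
  (exists c, total_curvature f c /\ c < 2 * PI) ->
  exists T0 kap Phi Cp, 0 < T0 /\ 0 < kap /\
    (forall x, derivable_pt_lim Phi x (- Gminus G x * f x)) /\ 0 <= Phi T0 /\
    (forall t, 0 <= t -> Phi t <= Cp) /\ (forall t, T0 <= t -> t <= kap * f t).
Proof.
  intros f G b1 b2 Hpos HG Hb1 Hb2 Heq f0 b10 [c [Htc Hc2]].
  destruct Htc as [K [cp [cm [Hgc [Ip [Im Hc]]]]]].
  destruct Hgc as [k1 [k2 [HC2 HK]]]. destruct HC2 as [Hk1 [Hk2 _]].
  assert (E1 : k1 = b1).
  { apply functional_extensionality; intro x. eapply uniqueness_limite; eauto. }
  subst k1.
  assert (E2 : k2 = b2).
  { apply functional_extensionality; intro x. eapply uniqueness_limite; eauto. }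
  subst k2.
  assert (HKG : forall t, 0 < t -> K t = G t).
  { intros t Ht. rewrite HK by auto. specialize (Hpos t Ht). specialize (Heq t).
    field_simplify; [|lra]. replace (b2 t) with (- (G t * f t)) by lra. field. lra. }
  assert (Hf0 : forall t, 0 <= t -> 0 <= f t).
  { intros t Ht. destruct (Rle_lt_or_eq_dec _ _ Ht) as [H | <-]; [left; auto|lra]. }
  assert (Hfc : continuity f) by (eapply deriv_cont; eauto).
  set (gp := fun t => Gplus G t * f t). set (gm := fun t => Gminus G t * f t).
  assert (Hgp : continuity gp) by (unfold gp, Gplus; apply cont_mult; auto; apply cont_Rmax0; auto).
  assert (Hgm : continuity gm) by (unfold gm, Gminus; apply cont_mult; auto; apply cont_Rmin0; auto).
  set (Pp := prim gp). set (Pm := prim gm).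
  assert (Lp := improper_to_prim (fun t => Gplus K t * f t) gp cp Hgp ltac:(intros t Ht; unfold gp, Gplus; rewrite HKG; auto) Ip).
  assert (Lm := improper_to_prim (fun t => Gminus K t * f t) gm cm Hgm ltac:(intros t Ht; unfold gm, Gminus; rewrite HKG; auto) Im).
  assert (Hsum : forall b, 0 <= b -> b1 b + Pp b + Pm b = 1).
  { intros b Hb.
    assert (H := const_int (fun t => b1 t + prim gp t + prim gm t) (fun t => b2 t + gp t + gm t) 0 b Hb).
    simpl in H. rewrite !prim0 in H. unfold Pp, Pm. rewrite <- b10.
    enough (b1 0 + 0 + 0 = b1 b + prim gp b + prim gm b) by lra. apply H.
    - intros x _. apply dl_plus; [apply dl_plus|]; auto; apply prim_deriv; auto.
    - intros x _. unfold gp, gm, Gplus, Gminus. rewrite Rmax0_eq. specialize (Heq x). lra. }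
  assert (HL : cp + cm < 1).
  { pose proof PI_RGT_0. rewrite Hc in Hc2. nra. }
  set (L := 1 - cp - cm).
  destruct (Lp (L / 4)) as [Bp [HBp0 HBp]]; [unfold L; lra|].
  destruct (Lm (L / 4)) as [Bm [HBm0 HBm]]; [unfold L; lra|].
  set (B1 := Rmax Bp Bm + 1).
  assert (HB1 : 0 < B1) by (unfold B1; pose proof (Rmax_l Bp Bm); lra).
  assert (Hb1L : forall b, B1 <= b -> L / 2 <= b1 b).
  { intros b Hb. assert (Bp <= b) by (unfold B1 in Hb; pose proof (Rmax_l Bp Bm); lra).
    assert (Bm <= b) by (unfold B1 in Hb; pose proof (Rmax_r Bp Bm); lra).
    specialize (HBp b H). specialize (HBm b H0). apply Rabs_def2 in HBp. apply Rabs_def2 in HBm.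
    specialize (Hsum b ltac:(lra)). unfold L, Pp, Pm in *. lra. }
  assert (HfL : forall t, B1 <= t -> L / 2 * (t - B1) <= f t).
  { intros t Ht.
    assert ((fun s => f s - L / 2 * s) B1 <= (fun s => f s - L / 2 * s) t).
    { apply (mono (fun s => f s - L / 2 * s) (fun s => b1 s - L / 2 * 1)); auto.
      - intros x _. apply dl_minus; auto. apply dl_scal, dl_id.
      - intros x Hx. specialize (Hb1L x (proj1 Hx)). lra. }
    simpl in H. specialize (Hpos B1 HB1). lra. }
  exists (2 * B1), (4 / L), (fun t => - Pm t), (- cm).
  assert (HL0 : 0 < L) by (unfold L; lra).
  split; [lra|]. split; [apply Rdiv_lt_0_compat; lra|].
  assert (HPm : forall x, derivable_pt_lim (fun t => - Pm t) x (- Gminus G x * f x)).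
  { intros x. apply dl_eq with (- gm x); [apply dl_opp, prim_deriv; auto|unfold gm; ring]. }
  assert (Hdec : forall a b, 0 <= a <= b -> Pm b <= Pm a).
  { intros a b Hab. assert (- Pm a <= - Pm b); [|lra].
    apply (mono (fun t => - Pm t) (fun t => - Gminus G t * f t)); [lra|intros; apply HPm|].
    intros x Hx. unfold Gminus. pose proof (Rmin_r (G x) 0). specialize (Hf0 x ltac:(lra)). nra. }
  split; [auto|]. split.
  - assert (Pm (2 * B1) <= Pm 0) by (apply Hdec; lra). unfold Pm in *. rewrite prim0 in H. lra.
  - split.
    + intros t Ht. assert (cm <= Pm t); [|lra].
      apply Rnot_lt_le. intros Hlt.
      destruct (Lm (cm - Pm t)) as [B [HB0 HB]]; [lra|].
      specialize (HB (Rmax B t) (Rmax_l B t)). apply Rabs_def2 in HB.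
      assert (Pm (Rmax B t) <= Pm t) by (apply Hdec; split; [lra|apply Rmax_r]).
      fold Pm in HB. lra.
    + intros t Ht. specialize (HfL t ltac:(lra)).
      apply Rle_trans with (4 / L * (L / 2 * (t - B1))).
      * replace (4 / L * (L / 2 * (t - B1))) with (2 * (t - B1)) by (field; lra). lra.
      * apply Rmult_le_compat_l; auto. left; apply Rdiv_lt_0_compat; lra.
Qed.

Theorem lemma4p2 (f G : R -> R) :
  model_surface f ->
  continuity G ->
  jacobi_sol G f ->
  (exists c, total_curvature f c /\ c < 2 * PI) ->
  (exists m, jacobi_sol (Gminus G) m) /\
  (forall m, jacobi_sol (Gminus G) m ->
     model_surface m /\ finite_total_curvature m).
Proof.
  intros [a1 [a2 [_ [Hodd [_ Hpos]]]]] HG [b1 [b2 [Hb1 [Hb2 [Heq [f0 b10]]]]]] Htc.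
  set (q := fun t => - Gminus G t).
  assert (Hq : continuity q) by (unfold q, Gminus; apply cont_opp, cont_Rmin0; auto).
  assert (Hq0 : forall t, 0 <= q t) by (intros; unfold q, Gminus; pose proof (Rmin_r (G t) 0); lra).
  assert (Hb1e := odd_deriv_even f b1 Hodd Hb1).
  assert (Hb2o := even_deriv_odd b1 b2 Hb1e Hb2).
  assert (HGe : forall t, G (- t) = G t).
  { assert (Hp : forall t, 0 < t -> G (- t) = G t).
    { intros t Ht. pose proof (Heq t). pose proof (Heq (- t)). rewrite Hb2o, Hodd in H0.
      specialize (Hpos t Ht). apply Rmult_eq_reg_r with (f t); [|lra]. nra. }
    intros t. destruct (Rtotal_order t 0) as [H|[H|H]].
    - rewrite <- (Ropp_involutive t) at 2. symmetry. apply Hp; lra.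
    - subst; rewrite Ropp_0; auto.
    - apply Hp; auto. }
  assert (Hqe : forall t, q (- t) = q t) by (intros; unfold q, Gminus; rewrite HGe; auto).
  destruct (exist_sol q Hq) as [HM [HM1 [M0 M10]]].
  split.
  { exists (Msol q), (M1sol q), (fun t => q t * Msol q t). repeat split; auto.
    intros t; unfold q; ring. }
  intros m [m1 [m2 [Hm [Hm1 [Hmeq [m0 m10]]]]]].
  assert (Hm2 : forall t, m2 t = q t * m t) by (intros t; unfold q; specialize (Hmeq t); lra).
  assert (Hsol : solq q m m1).
  { split; auto. intros x; rewrite <- Hm2; auto. }
  assert (HmM : forall t, m t = Msol q t).
  { apply (uniq_sol q m m1 (Msol q) (M1sol q)); auto; [split; auto|congruence|congruence]. }
  assert (Hge : forall t, 0 <= t -> t <= m t).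
  { intros t Ht; rewrite HmM; apply sol_ge; auto. }
  assert (Hmodd : forall t, m (- t) = - m t).
  { intros t. assert (H := uniq_sol q m m1 (fun t => - m (- t)) (fun t => m1 (- t)) Hq Hq0 Hsol
       (odd_sol q m m1 Hqe Hsol)). simpl in H. rewrite H; [rewrite Ropp_involutive; ring| |].
    - rewrite Ropp_0, m0; ring.
    - rewrite Ropp_0; auto. }
  assert (Hm2c : continuity m2).
  { replace m2 with (fun t => q t * m t) by (apply functional_extensionality; intros; rewrite Hm2; auto).
    apply cont_mult; auto. eapply deriv_cont; eauto. }
  split.
  { exists m1, m2. split; [split; [auto|split; auto]|]. split; auto. split; auto.
    intros t Ht. specialize (Hge t ltac:(lra)). lra. }
  destruct (f_analysis f G b1 b2 Hpos HG Hb1 Hb2 Heq f0 b10 Htc) as [T0 [kap [Phi [Cp [HT0 [Hk [HPhi [HP0 [HPC Hf]]]]]]]]].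
  destruct (m_bound q m m1 f Phi T0 kap Cp Hq0 Hsol m0 m10 Hge HT0 Hk HPhi HP0 HPC Hf) as [Hmono [C HC]].
  destruct (mono_lim m1 C Hmono HC) as [L1 HL1].
  exists (2 * PI * 0 + 2 * PI * (1 - L1)).
  exists (Gminus G), 0, (1 - L1). split; [|split; [|split; [|reflexivity]]].
  - exists m1, m2. split; [split; [auto|split; auto]|].
    intros t Ht. specialize (Hge t ltac:(lra)). specialize (Hmeq t). field_simplify; [|lra].
    replace (m2 t) with (- (Gminus G t * m t)) by lra. field. lra.
  - replace (fun t => Gplus (Gminus G) t * m t) with (fun _ : R => 0).
    + split.
      * intros b Hb. constructor. apply integrable_cont, cont_const.
      * intros eps He. exists 0. intros b pr Hb.
        rewrite (FTC_cont (fun _ => 0) (fun _ => 0) 0 b pr Hb); [rewrite Rminus_diag, Rminus_diag, Rabs_R0; lra| |].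
        -- intros; apply cont_const.
        -- intros; apply dl_const.
    + apply functional_extensionality; intro t. unfold Gplus, Gminus.
      rewrite (Rmax_right _ 0) by apply Rmin_r. ring.
  - replace (fun t => Gminus (Gminus G) t * m t) with (fun t => - m2 t).
    + split.
      * intros b Hb. constructor. apply integrable_cont, cont_opp; auto.
      * intros eps He. destruct (HL1 eps He) as [B HB]. exists (Rmax B 0). intros b pr Hb.
        rewrite (FTC_cont (fun t => - m2 t) (fun t => - m1 t) 0 b pr).
        -- rewrite m10. replace (- m1 b - - (1) - (1 - L1)) with (- (m1 b - L1)) by ring.
           rewrite Rabs_Ropp. apply HB. pose proof (Rmax_l B 0); lra.
        -- pose proof (Rmax_r B 0); lra.
        -- intros; apply cont_opp; auto.
        -- intros; apply dl_opp; auto.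
    + apply functional_extensionality; intro t. unfold Gminus.
      rewrite (Rmin_left (Rmin (G t) 0) 0) by apply Rmin_r. specialize (Hmeq t). unfold Gminus in Hmeq. lra.
Qed.
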